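(* Let $f$, $g$, $\xi$, $F$ satisfy the standing assumptions below, and let $x$ be the unique continuous solution of $x'(t)=-f(x(t))+g(t)$, $t>0$, $x(0)=\xi$. Suppose there exist $\delta>0$ and a function $\phi$ which is increasing on $(0,\delta)$ with $\lim_{x\to0^+}f(x)/\phi(x)=1$. If \[ \lim_{t\to\infty}\frac{g(t)}{f(F^{-1}(t))}=0, \] then \[ \lim_{t\to\infty}\frac{F(x(t))}{t}=1 . \]
   Context: Standing assumptions: $f\in C(\mathbb{R};\mathbb{R})$ is locally Lipschitz continuous on $\mathbb{R}$, $f(0)=0$ and $xf(x)>0$ for $x\neq0$; $g\in C([0,\infty);\mathbb{R})$ with $g(t)>0$ for $t>0$; the initial value $\xi>0$. Define $F(x)=\int_x^1 \frac{du}{f(u)}$ for $x>0$, and assume $\lim_{x\to0^+}F(x)=+\infty$. $F$ is strictly decreasing on $(0,\infty)$ and $F^{-1}$ denotes its inverse (defined in particular on $[0,\infty)$, with $F^{-1}(t)\to0$ as $t\to\infty$). *)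

(* Defs.v *)
From Stdlib Require Import Reals Lra ClassicalEpsilon.
Open Scope R_scope.

(* Oriented Riemann integral of h from a to b (Stdlib convention: RiemannInt
   is oriented). When h is not Riemann integrable the value is 0 (never used
   in the theorem, since 1/f is continuous on (0,oo)). The value does not
   depend on the chosen integrability proof (RiemannInt_P5). *)
Definition RInt (h : R -> R) (a b : R) : R :=
  match excluded_middle_informative (exists pr : Riemann_integrable h a b, True) with
  | left H => RiemannInt (proj1_sig (constructive_indefinite_description _ H))
  | right _ => 0
  end.

Definition Fdef (f : R -> R) (x : R) : R := RInt (fun u => / f u) x 1.

(* F^{-1}(t): the (unique, since F is strictly decreasing) y > 0 with F y = t. *)
Definition Finv (f : R -> R) (t : R) : R :=
  epsilon (inhabits 0) (fun y => 0 < y /\ Fdef f y = t).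

Definition locally_lipschitz (f : R -> R) : Prop :=
  forall a b : R, exists L : R, forall u v : R,
    a <= u <= b -> a <= v <= b -> Rabs (f u - f v) <= L * Rabs (u - v).

Definition cont_on_nonneg (h : R -> R) : Prop :=
  forall t, 0 <= t -> forall eps, 0 < eps -> exists d, 0 < d /\
    forall s, 0 <= s -> Rabs (s - t) < d -> Rabs (h s - h t) < eps.

Definition lim_infty (h : R -> R) (l : R) : Prop :=
  forall eps, 0 < eps -> exists T, forall t, T < t -> Rabs (h t - l) < eps.

Definition lim_0plus (h : R -> R) (l : R) : Prop :=
  forall eps, 0 < eps -> exists d, 0 < d /\
    forall x, 0 < x < d -> Rabs (h x - l) < eps.

Definition lim_0plus_infty (h : R -> R) : Prop :=
  forall M, exists d, 0 < d /\ forall x, 0 < x < d -> M < h x.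

(* Main.v *)
Require Import Defs.
From Stdlib Require Import Reals Lra ClassicalEpsilon Classical.
From Coquelicot Require Import Coquelicot.
Open Scope R_scope.


Lemma f_cont (f : R -> R) : locally_lipschitz f -> forall c, continuity_pt f c.
Proof.
  intros Hl c. destruct (Hl (c-1) (c+1)) as [L HL].
  intros e He. exists (Rmin 1 (e / (Rabs L + 1))). split.
  - apply Rmin_pos; [lra|]. apply Rdiv_lt_0_compat; [lra|]. pose proof (Rabs_pos L); lra.
  - intros y [_ Hy]. unfold R_dist in *. simpl in *. unfold R_dist in *.
    assert (Hm1 := Rmin_l 1 (e / (Rabs L + 1))). assert (Hm2 := Rmin_r 1 (e / (Rabs L + 1))).
    assert (Hy1 : Rabs (y - c) < 1) by lra.
    apply Rabs_def2 in Hy1.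
    assert (H := HL y c ltac:(lra) ltac:(lra)).
    assert (HLp := Rabs_pos L). assert (HLL := Rle_abs L).
    assert (Hyc := Rabs_pos (y - c)).
    apply Rle_lt_trans with (Rabs L * Rabs (y - c) + 0 * 1).
    + assert (L * Rabs (y-c) <= Rabs L * Rabs (y-c)) by (apply Rmult_le_compat_r; lra). lra.
    + assert (Hd : Rabs (y - c) < e / (Rabs L + 1)) by lra.
      assert (Rabs (y-c) * (Rabs L + 1) < e).
      { apply (Rmult_lt_compat_r (Rabs L + 1)) in Hd; [|lra].
        unfold Rdiv in Hd. rewrite Rmult_assoc, Rinv_l in Hd; lra. }
      nra.
Qed.

Lemma f_pos (f : R -> R) : (forall u, u <> 0 -> u * f u > 0) -> forall u, 0 < u -> 0 < f u.
Proof. intros H u Hu. specialize (H u ltac:(lra)). nra. Qed.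

Lemma f_neg (f : R -> R) : (forall u, u <> 0 -> u * f u > 0) -> forall u, u < 0 -> f u < 0.
Proof. intros H u Hu. specialize (H u ltac:(lra)). nra. Qed.

Lemma h_cont (f : R -> R) : locally_lipschitz f -> (forall u, u <> 0 -> u * f u > 0) ->
  forall z, 0 < z -> continuity_pt (fun u => / f u) z.
Proof.
  intros Hl Hs z Hz. apply (continuity_pt_inv f z (f_cont f Hl z)).
  pose proof (f_pos f Hs z Hz). lra.
Qed.

Lemma h_exRInt (f : R -> R) : locally_lipschitz f -> (forall u, u <> 0 -> u * f u > 0) ->
  forall a b, 0 < a -> 0 < b -> ex_RInt (fun u => / f u) a b.
Proof.
  intros Hl Hs a b Ha Hb. apply (@ex_RInt_continuous R_CompleteNormedModule). intros z Hz.
  apply continuity_pt_filterlim. apply h_cont; auto.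
  assert (0 < Rmin a b) by (apply Rmin_pos; auto). lra.
Qed.

Lemma F_RInt (f : R -> R) : locally_lipschitz f -> (forall u, u <> 0 -> u * f u > 0) ->
  forall y, 0 < y -> Fdef f y = - RInt (fun u => / f u) 1 y.
Proof.
  intros Hl Hs y Hy.
  assert (He : ex_RInt (fun u => / f u) y 1) by (apply h_exRInt; auto; lra).
  assert (Hs' : RInt (fun u => / f u) y 1 = - RInt (fun u => / f u) 1 y).
  { rewrite <- (opp_RInt_swap (fun u => / f u) 1 y). reflexivity.
    apply ex_RInt_swap; auto. }
  rewrite <- Hs'. unfold Fdef, Defs.RInt.
  destruct excluded_middle_informative as [H|H].
  - rewrite <- RInt_Reals. reflexivity.
  - exfalso. apply H. exists (ex_RInt_Reals_0 _ _ _ He). exact I.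
Qed.

Lemma F_deriv (f : R -> R) : locally_lipschitz f -> (forall u, u <> 0 -> u * f u > 0) ->
  forall y, 0 < y -> derivable_pt_lim (Fdef f) y (- / f y).
Proof.
  intros Hl Hs y Hy. apply is_derive_Reals.
  apply (is_derive_ext_loc (fun z => - RInt (fun u => / f u) 1 z)).
  { apply (locally_interval _ y 0 p_infty). simpl; lra. simpl; auto.
    intros z Hz _. simpl in Hz. symmetry. apply F_RInt; auto. }
  apply (is_derive_opp (fun z => RInt (fun u => / f u) 1 z) y (/ f y)).
  apply (is_derive_RInt (fun u => / f u) (fun z => RInt (fun u => / f u) 1 z) 1 y).
  { apply (locally_interval _ y 0 p_infty). simpl; lra. simpl; auto.
    intros z Hz _. simpl in Hz. apply (@RInt_correct R_CompleteNormedModule). apply h_exRInt; auto; lra. }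
  apply continuity_pt_filterlim. apply h_cont; auto.
Qed.

Lemma F_cont (f : R -> R) : locally_lipschitz f -> (forall u, u <> 0 -> u * f u > 0) ->
  forall y, 0 < y -> continuity_pt (Fdef f) y.
Proof.
  intros Hl Hs y Hy. apply derivable_continuous_pt. exists (- / f y). apply F_deriv; auto.
Qed.

Lemma F_one (f : R -> R) : locally_lipschitz f -> (forall u, u <> 0 -> u * f u > 0) ->
  Fdef f 1 = 0.
Proof.
  intros Hl Hs. rewrite F_RInt; auto; try lra. rewrite RInt_point. simpl. unfold zero; simpl. lra.
Qed.

Lemma F_decr (f : R -> R) : locally_lipschitz f -> (forall u, u <> 0 -> u * f u > 0) ->
  forall a b, 0 < a -> a < b -> Fdef f b < Fdef f a.
Proof.
  intros Hl Hs a b Ha Hab.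
  destruct (MVT_cor2 (Fdef f) (fun y => - / f y) a b Hab) as [c [Hc1 Hc2]].
  { intros c Hc. apply F_deriv; auto; lra. }
  assert (0 < / f c) by (apply Rinv_0_lt_compat, (f_pos f Hs); lra).
  nra.
Qed.

Lemma F_decr_le (f : R -> R) : locally_lipschitz f -> (forall u, u <> 0 -> u * f u > 0) ->
  forall a b, 0 < a -> a <= b -> Fdef f b <= Fdef f a.
Proof.
  intros Hl Hs a b Ha Hab. destruct (Req_dec a b) as [->|]. lra.
  left. apply F_decr; auto; lra.
Qed.

Section S.
Lemma p_spec (f : R -> R) : locally_lipschitz f -> (forall u, u <> 0 -> u * f u > 0) ->
  lim_0plus_infty (Fdef f) ->
  forall t, 0 < t -> 0 < Finv f t /\ Fdef f (Finv f t) = t.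
Proof.
  intros Hl Hs Hinf t Ht. unfold Finv. apply epsilon_spec.
  destruct (Hinf t) as [d [Hd Hd']].
  set (a := Rmin (d/2) (1/2)).
  assert (Ha0 : 0 < a) by (apply Rmin_pos; lra).
  assert (Ha1 : a < 1) by (unfold a; pose proof (Rmin_r (d/2) (1/2)); lra).
  assert (Had : a < d) by (unfold a; pose proof (Rmin_l (d/2) (1/2)); lra).
  assert (HFa := Hd' a ltac:(lra)).
  destruct (Ranalysis5.IVT_interv (fun y => t - Fdef f y) a 1) as [z [Hz1 Hz2]].
  - intros y Hy. apply continuity_pt_minus. apply continuity_pt_const. intros u v; auto.
    apply F_cont; auto; lra.
  - lra.
  - lra.
  - rewrite F_one; auto; lra.
  - exists z. split; lra.
Qed.

Lemma p_lt (f : R -> R) : locally_lipschitz f -> (forall u, u <> 0 -> u * f u > 0) ->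
  lim_0plus_infty (Fdef f) ->
  forall t b, 0 < t -> 0 < b -> Fdef f b < t -> Finv f t < b.
Proof.
  intros Hl Hs Hinf t b Ht Hb H. destruct (p_spec f Hl Hs Hinf t Ht) as [H1 H2].
  destruct (Rlt_or_le (Finv f t) b) as [|Hge]; auto.
  assert (Fdef f (Finv f t) <= Fdef f b) by (apply F_decr_le; auto). lra.
Qed.

Lemma p_gt (f : R -> R) : locally_lipschitz f -> (forall u, u <> 0 -> u * f u > 0) ->
  lim_0plus_infty (Fdef f) ->
  forall t a, 0 < t -> 0 < a -> t < Fdef f a -> a < Finv f t.
Proof.
  intros Hl Hs Hinf t a Ht Ha H. destruct (p_spec f Hl Hs Hinf t Ht) as [H1 H2].
  destruct (Rlt_or_le a (Finv f t)) as [|Hge]; auto.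
  assert (Fdef f a <= Fdef f (Finv f t)) by (apply F_decr_le; auto). lra.
Qed.

Lemma p_to0 (f : R -> R) : locally_lipschitz f -> (forall u, u <> 0 -> u * f u > 0) ->
  lim_0plus_infty (Fdef f) ->
  forall eta, 0 < eta -> exists T, 0 <= T /\ forall t, T < t -> Finv f t < eta.
Proof.
  intros Hl Hs Hinf eta He. exists (Rmax 0 (Fdef f eta)). split. apply Rmax_l.
  intros t Ht. pose proof (Rmax_l 0 (Fdef f eta)). pose proof (Rmax_r 0 (Fdef f eta)).
  apply p_lt; auto; lra.
Qed.

Lemma p_cont (f : R -> R) : locally_lipschitz f -> (forall u, u <> 0 -> u * f u > 0) ->
  lim_0plus_infty (Fdef f) ->
  forall t0, 0 < t0 -> forall eta, 0 < eta -> exists d, 0 < d /\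
    forall t, Rabs (t - t0) < d -> 0 < t /\ Rabs (Finv f t - Finv f t0) < eta.
Proof.
  intros Hl Hs Hinf t0 Ht0 eta0 He0.
  destruct (p_spec f Hl Hs Hinf t0 Ht0) as [Hp0 HF0].
  set (p0 := Finv f t0) in *.
  set (eta := Rmin eta0 (p0/2)).
  assert (He : 0 < eta) by (apply Rmin_pos; lra).
  assert (He1 : eta <= eta0) by apply Rmin_l.
  assert (He2 : eta <= p0/2) by apply Rmin_r.
  assert (Hb : Fdef f (p0 + eta) < t0) by (rewrite <- HF0; apply F_decr; auto; lra).
  assert (Ha : t0 < Fdef f (p0 - eta)) by (rewrite <- HF0; apply F_decr; auto; lra).
  exists (Rmin t0 (Rmin (t0 - Fdef f (p0 + eta)) (Fdef f (p0 - eta) - t0))).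
  split. repeat apply Rmin_pos; lra.
  intros t Ht.
  pose proof (Rmin_l t0 (Rmin (t0 - Fdef f (p0 + eta)) (Fdef f (p0 - eta) - t0))).
  pose proof (Rmin_r t0 (Rmin (t0 - Fdef f (p0 + eta)) (Fdef f (p0 - eta) - t0))).
  pose proof (Rmin_l (t0 - Fdef f (p0 + eta)) (Fdef f (p0 - eta) - t0)).
  pose proof (Rmin_r (t0 - Fdef f (p0 + eta)) (Fdef f (p0 - eta) - t0)).
  apply Rabs_def2 in Ht.
  assert (Htp : 0 < t) by lra. split; auto.
  assert (Finv f t < p0 + eta) by (apply p_lt; auto; lra).
  assert (p0 - eta < Finv f t) by (apply p_gt; auto; lra).
  apply Rabs_def1; lra.
Qed.

Lemma p_deriv (f : R -> R) : locally_lipschitz f -> (forall u, u <> 0 -> u * f u > 0) ->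
  lim_0plus_infty (Fdef f) ->
  forall t0, 0 < t0 -> derivable_pt_lim (Finv f) t0 (- f (Finv f t0)).
Proof.
  intros Hl Hs Hinf t0 Ht0 e He.
  destruct (p_spec f Hl Hs Hinf t0 Ht0) as [Hp0 HF0].
  destruct (f_cont f Hl (Finv f t0) e He) as [eta [Heta Heta']].
  destruct (p_cont f Hl Hs Hinf t0 Ht0 eta Heta) as [d [Hd Hd']].
  exists (mkposreal d Hd). intros hh Hh0 Hh. simpl in Hh.
  destruct (Hd' (t0 + hh) ltac:(replace (t0 + hh - t0) with hh by ring; exact Hh)) as [Ht Hpt].
  destruct (p_spec f Hl Hs Hinf (t0 + hh) Ht) as [Hp1 HF1].
  set (p0 := Finv f t0) in *. set (p1 := Finv f (t0 + hh)) in *.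
  assert (Hmvt : exists c, Rabs (c - p0) < eta /\ 0 < c /\ (p1 - p0) / hh = - f c).
  { destruct (Rtotal_order p1 p0) as [Hlt|[Heq|Hgt]].
    - destruct (MVT_cor2 (Fdef f) (fun y => - / f y) p1 p0 Hlt) as [c [Hc1 Hc2]].
      { intros c Hc. apply F_deriv; auto; lra. }
      exists c. apply Rabs_def2 in Hpt.
      assert (0 < f c) by (apply (f_pos f Hs); lra).
      split. apply Rabs_def1; lra. split. lra.
      rewrite HF0, HF1 in Hc1.
      assert (Hhh : hh = - ((p1 - p0) * / f c)).
      { replace (- ((p1 - p0) * / f c)) with (/ f c * (p0 - p1)) by ring. lra. }
      rewrite Hhh. field. split; lra.
    - exfalso. assert (Fdef f p1 = Fdef f p0) by (rewrite Heq; reflexivity). lra.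
    - destruct (MVT_cor2 (Fdef f) (fun y => - / f y) p0 p1 Hgt) as [c [Hc1 Hc2]].
      { intros c Hc. apply F_deriv; auto; lra. }
      exists c. apply Rabs_def2 in Hpt.
      assert (0 < f c) by (apply (f_pos f Hs); lra).
      split. apply Rabs_def1; lra. split. lra.
      rewrite HF0, HF1 in Hc1.
      assert (Hhh : hh = - ((p1 - p0) * / f c)).
      { replace (- ((p1 - p0) * / f c)) with (- / f c * (p1 - p0)) by ring. lra. }
      rewrite Hhh. field. split; lra. }
  destruct Hmvt as [c [Hc1 [Hc2 Hc3]]].
  rewrite Hc3. replace (- f c - - f p0) with (- (f c - f p0)) by ring. rewrite Rabs_Ropp.
  destruct (Req_dec c p0) as [->|Hne]. replace (f p0 - f p0) with 0 by ring. rewrite Rabs_R0. lra.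
  apply (Heta' c). split. unfold D_x, no_cond. split; auto. simpl. unfold R_dist. exact Hc1.
Qed.
End S.

Lemma last_cross (h : R -> R) a b K : a < b ->
  (forall t, a <= t <= b -> forall e, 0 < e -> exists d, 0 < d /\
     forall s, a <= s <= b -> Rabs (s - t) < d -> Rabs (h s - h t) < e) ->
  K <= h a -> h b < K ->
  exists s, a <= s < b /\ K <= h s /\ forall c, s < c <= b -> h c < K.
Proof.
  intros Hab Hc Ha Hb.
  set (E := fun s => a <= s <= b /\ K <= h s).
  destruct (completeness E) as [m [Hub Hlub]].
  { exists b. intros y [Hy _]. lra. }
  { exists a. split; [lra|auto]. }
  assert (Ham : a <= m) by (apply Hub; split; [lra|auto]).
  assert (Hmb : m <= b) by (apply Hlub; intros y [Hy _]; lra).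
  assert (HKm : K <= h m).
  { destruct (Rle_or_lt K (h m)) as [|Hlt]; auto. exfalso.
    destruct (Hc m ltac:(lra) (K - h m) ltac:(lra)) as [d [Hd Hd']].
    assert (Hnub : ~ is_upper_bound E (m - d)).
    { intro H. specialize (Hlub _ H). lra. }
    apply Hnub. intros y [Hy1 Hy2].
    destruct (Rle_or_lt y (m - d)) as [|Hy]; auto. exfalso.
    assert (y <= m) by (apply Hub; split; auto).
    specialize (Hd' y Hy1 ltac:(apply Rabs_def1; lra)).
    apply Rabs_def2 in Hd'. lra. }
  exists m. split; [split; auto|split; auto].
  { destruct (Req_dec m b) as [->|]; [lra|lra]. }
  intros c [Hc1 Hc2]. destruct (Rlt_or_le (h c) K) as [|Hge]; auto.
  assert (c <= m) by (apply Hub; split; [lra|auto]). lra.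
Qed.

Lemma deriv_cont (h h' : R -> R) a b :
  (forall t, a <= t <= b -> derivable_pt_lim h t (h' t)) ->
  (forall t, a <= t <= b -> forall e, 0 < e -> exists d, 0 < d /\
     forall s, a <= s <= b -> Rabs (s - t) < d -> Rabs (h s - h t) < e).
Proof.
  intros Hd t Ht e He.
  assert (Hc : continuity_pt h t) by (apply derivable_continuous_pt; exists (h' t); apply Hd; auto).
  destruct (Hc e He) as [d [Hd1 Hd2]]. exists d. split; auto.
  intros s Hs Hst. destruct (Req_dec s t) as [->|Hne].
  replace (h t - h t) with 0 by ring. rewrite Rabs_R0; lra.
  apply (Hd2 s). split. split; auto. exact I. simpl. exact Hst.
Qed.

Lemma x_pos (f g : R -> R) (xi : R) (x : R -> R) :
  f 0 = 0 -> (forall u, u <> 0 -> u * f u > 0) -> (forall t, 0 < t -> g t > 0) -> 0 < xi ->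
  cont_on_nonneg x -> x 0 = xi ->
  (forall t, 0 < t -> derivable_pt_lim x t (- f (x t) + g t)) ->
  forall t, 0 <= t -> 0 < x t.
Proof.
  intros Hf0 Hsg0 Hg Hxi Hxc Hx0 Hxd t1 Ht1.
  destruct (Rlt_or_le 0 (x t1)) as [|Hle]; auto. exfalso.
  destruct (Req_dec t1 0) as [->|Hne]; [lra|].
  destruct (last_cross (fun r => - x (t1 - r)) 0 t1 0) as [s [Hs1 [Hs2 Hs3]]].
  - lra.
  - intros t Ht e He. destruct (Hxc (t1 - t) ltac:(lra) e He) as [d [Hd Hd']].
    exists d. split; auto. intros s Hs Hst.
    replace (- x (t1 - s) - - x (t1 - t)) with (- (x (t1 - s) - x (t1 - t))) by ring.
    rewrite Rabs_Ropp. apply Hd'. lra. replace (t1 - s - (t1 - t)) with (- (s - t)) by ring.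
    rewrite Rabs_Ropp; auto.
  - replace (t1 - 0) with t1 by ring. lra.
  - replace (t1 - t1) with 0 by ring. lra.
  - set (sg := t1 - s) in *.
    assert (Hsg : 0 < sg) by (unfold sg; lra).
    assert (Hxs : x sg <= 0) by lra.
    assert (Hleft : forall r, 0 <= r < sg -> 0 < x r).
    { intros r Hr. specialize (Hs3 (t1 - r) ltac:(unfold sg in Hr; lra)).
      replace (t1 - (t1 - r)) with r in Hs3 by ring. lra. }
    assert (HD : 0 < - f (x sg) + g sg).
    { assert (f (x sg) <= 0).
      { destruct (Req_dec (x sg) 0) as [->|]. lra. left. apply (f_neg f Hsg0). lra. }
      specialize (Hg sg Hsg). lra. }
    destruct (Hxd sg Hsg _ HD) as [[d Hd] Hd']. simpl in Hd'.
    set (hh := - Rmin d sg / 2).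
    assert (Hm1 := Rmin_l d sg). assert (Hm2 := Rmin_r d sg).
    assert (Hm0 : 0 < Rmin d sg) by (apply Rmin_pos; lra).
    assert (Hhh : hh < 0) by (unfold hh; lra).
    specialize (Hd' hh ltac:(lra) ltac:(rewrite Rabs_left; unfold hh; lra)).
    assert (Hxp : 0 < x (sg + hh)) by (apply Hleft; unfold hh; lra).
    assert (Hq : (x (sg + hh) - x sg) / hh < 0).
    { unfold Rdiv. assert (/ hh < 0) by (apply Rinv_lt_0_compat; lra). nra. }
    apply Rabs_def2 in Hd'. lra.
Qed.

Lemma lin_deriv (a t : R) : derivable_pt_lim (fun s => a * s) t a.
Proof.
  assert (H := derivable_pt_lim_scal id a t 1 (derivable_pt_lim_id t)).
  rewrite Rmult_1_r in H. exact H.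
Qed.

Theorem theorem1 (f g : R -> R) (xi : R) (x : R -> R) :
  locally_lipschitz f ->
  f 0 = 0 ->
  (forall u, u <> 0 -> u * f u > 0) ->
  cont_on_nonneg g ->
  (forall t, 0 < t -> g t > 0) ->
  0 < xi ->
  lim_0plus_infty (Fdef f) ->
  cont_on_nonneg x ->
  x 0 = xi ->
  (forall t, 0 < t -> derivable_pt_lim x t (- f (x t) + g t)) ->
  (exists (delta : R) (phi : R -> R), 0 < delta /\
     (forall u v, 0 < u -> u <= v -> v < delta -> phi u <= phi v) /\
     lim_0plus (fun u => f u / phi u) 1) ->
  lim_infty (fun t => g t / f (Finv f t)) 0 ->
  lim_infty (fun t => Fdef f (x t) / t) 1.
Proof.
  intros Hl Hf0 Hs Hgc Hg Hxi Hinf Hxc Hx0 Hxd Hphi Hlim.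
  assert (Hxp := x_pos f g xi x Hf0 Hs Hg Hxi Hxc Hx0 Hxd).
  assert (Hfp := f_pos f Hs).
  set (u := fun t => Fdef f (x t)).
  set (u' := fun t => 1 - g t / f (x t)).
  assert (Hud : forall t, 0 < t -> derivable_pt_lim u t (u' t)).
  { intros t Ht.
    assert (H := derivable_pt_lim_comp x (Fdef f) t _ _ (Hxd t Ht)
                   (F_deriv f Hl Hs (x t) (Hxp t ltac:(lra)))).
    unfold comp in H. unfold u, u'.
    replace (1 - g t / f (x t)) with (- / f (x t) * (- f (x t) + g t)). exact H.
    assert (0 < f (x t)) by (apply Hfp, Hxp; lra). field. lra. }
  assert (Hu'lt : forall t, 0 < t -> u' t < 1).
  { intros t Ht. unfold u'. assert (0 < f (x t)) by (apply Hfp, Hxp; lra).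
    assert (0 < g t / f (x t)) by (apply Rdiv_lt_0_compat; auto; apply Hg; auto). lra. }
  assert (Hup : forall t, 1 <= t -> u t <= u 1 + (t - 1)).
  { intros t Ht. destruct (Req_dec t 1) as [->|Hne]. lra.
    destruct (MVT_cor2 u u' 1 t ltac:(lra)) as [c [Hc1 Hc2]].
    { intros c Hc. apply Hud; lra. }
    assert (u' c < 1) by (apply Hu'lt; lra). nra. }
  destruct (Hlim 1 ltac:(lra)) as [T1 HT1].
  set (T2 := Rmax T1 0 + 1).
  assert (HT2a : T1 < T2) by (unfold T2; pose proof (Rmax_l T1 0); lra).
  assert (HT2b : 0 < T2) by (unfold T2; pose proof (Rmax_r T1 0); lra).
  assert (Hgp : forall t, T1 < t -> 0 < t -> g t < f (Finv f t)).
  { intros t Ht Ht0. specialize (HT1 t Ht).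
    destruct (p_spec f Hl Hs Hinf t Ht0) as [Hp1 _].
    assert (0 < f (Finv f t)) by auto.
    rewrite Rminus_0_r in HT1. apply Rabs_def2 in HT1.
    destruct HT1 as [HT1 _].
    apply (Rmult_lt_compat_r (f (Finv f t))) in HT1; auto.
    unfold Rdiv in HT1. rewrite Rmult_assoc, Rinv_l in HT1; lra. }
  set (B := x T2 + Finv f T2).
  assert (Hbd : forall t, T2 <= t -> x t <= B).
  { intros t Ht. destruct (p_spec f Hl Hs Hinf T2 HT2b) as [HpT2 _].
    destruct (Req_dec t T2) as [->|Hne]. unfold B; lra.
    destruct (MVT_cor2 (fun s => x s + Finv f s) (fun s => (- f (x s) + g s) + - f (Finv f s))
               T2 t ltac:(lra)) as [c [Hc1 Hc2]].
    { intros c Hc. apply (derivable_pt_lim_plus x (Finv f)).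
      apply Hxd; lra. apply p_deriv; auto; lra. }
    destruct (p_spec f Hl Hs Hinf t ltac:(lra)) as [Hpt _].
    assert (g c < f (Finv f c)) by (apply Hgp; lra).
    assert (0 < f (x c)) by (apply Hfp, Hxp; lra).
    assert (- f (x c) + g c + - f (Finv f c) < 0) by lra.
    unfold B. nra. }
  destruct Hphi as [delta [phi [Hdel [Hmon Hlp]]]].
  destruct (Hlp (1/2) ltac:(lra)) as [d1 [Hd1 Hd1']].
  set (dl := Rmin d1 delta).
  assert (Hdl : 0 < dl) by (apply Rmin_pos; lra).
  assert (Hdl1 : dl <= d1) by apply Rmin_l. assert (Hdl2 : dl <= delta) by apply Rmin_r.
  assert (Hphi_b : forall y, 0 < y -> y < dl -> 0 < phi y /\ f y < 3/2 * phi y /\ phi y < 2 * f y).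
  { intros y Hy0 Hy1. specialize (Hd1' y ltac:(lra)). apply Rabs_def2 in Hd1'.
    assert (0 < f y) by auto.
    assert (Hph : 0 < phi y).
    { destruct (Rlt_or_le 0 (phi y)) as [|Hle]; auto. exfalso.
      destruct Hle as [Hlt|Heq].
      - assert (/ phi y < 0) by (apply Rinv_lt_0_compat; auto).
        unfold Rdiv in Hd1'. nra.
      - unfold Rdiv in Hd1'. rewrite Heq, Rinv_0 in Hd1'. lra. }
    split; auto.
    assert (Hq : f y = (f y / phi y) * phi y) by (field; lra).
    split; nra. }
  assert (Hcmp : forall a b, 0 < a -> a <= b -> b < dl -> f a <= 3 * f b).
  { intros a b Ha Hab Hb.
    destruct (Hphi_b a Ha ltac:(lra)) as [Ha1 [Ha2 Ha3]].
    destruct (Hphi_b b ltac:(lra) Hb) as [Hb1 [Hb2 Hb3]].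
    assert (phi a <= phi b) by (apply Hmon; lra). lra. }
  assert (Hm : exists m, 0 < m /\ forall y, dl <= y <= B -> m <= f y).
  { destruct (Rle_or_lt dl B) as [HdB|HdB].
    - destruct (continuity_ab_min f dl B HdB) as [mx [Hmx1 Hmx2]].
      { intros c _. apply f_cont; auto. }
      exists (f mx). split. apply Hfp; lra. auto.
    - exists 1. split. lra. intros y Hy. lra. }
  destruct Hm as [m [Hm0 Hm1]].
  intros eps Heps.
  set (ep := Rmin (eps / 4) (1/2)).
  assert (Hep0 : 0 < ep) by (apply Rmin_pos; lra).
  assert (Hep1 : ep <= eps/4) by apply Rmin_l. assert (Hep2 : ep <= 1/2) by apply Rmin_r.
  destruct (Hlim (ep/3) ltac:(lra)) as [T3 HT3].
  destruct (f_cont f Hl 0 (ep * m) ltac:(nra)) as [eta0 [Heta0 Heta0']].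
  destruct (p_to0 f Hl Hs Hinf (Rmin eta0 dl) ltac:(apply Rmin_pos; lra)) as [T4 [HT40 HT4]].
  set (T := Rmax (Rmax T2 1) (Rmax (Rmax T3 0) T4) + 1).
  assert (HTa := Rmax_l (Rmax T2 1) (Rmax (Rmax T3 0) T4)).
  assert (HTb := Rmax_r (Rmax T2 1) (Rmax (Rmax T3 0) T4)).
  assert (HTc := Rmax_l T2 1). assert (HTd := Rmax_r T2 1).
  assert (HTe := Rmax_l (Rmax T3 0) T4). assert (HTf := Rmax_r (Rmax T3 0) T4).
  assert (HTg := Rmax_l T3 0). assert (HTh := Rmax_r T3 0).
  assert (Hkey : forall t, T <= t -> u t <= t -> 1 - ep < u' t).
  { intros t Ht Hut. unfold T in Ht.
    destruct (p_spec f Hl Hs Hinf t ltac:(lra)) as [Hp1 Hp2].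
    assert (Hxt : 0 < x t) by (apply Hxp; lra).
    assert (Hfx : 0 < f (x t)) by auto.
    assert (Hpx : Finv f t <= x t).
    { destruct (Rle_or_lt (Finv f t) (x t)) as [|Hlt]; auto. exfalso.
      assert (Fdef f (Finv f t) < Fdef f (x t)) by (apply F_decr; auto).
      unfold u in Hut. lra. }
    assert (Hpsmall := HT4 t ltac:(lra)).
    assert (Hm1' := Rmin_l eta0 dl). assert (Hm2' := Rmin_r eta0 dl).
    assert (Hfp_small : f (Finv f t) < ep * m).
    { assert (H := Heta0' (Finv f t)). simpl in H. unfold R_dist, D_x, no_cond in H.
      rewrite Hf0, Rminus_0_r, Rminus_0_r in H.
      assert (Rabs (f (Finv f t)) < ep * m).
      { apply H. split. split; auto; lra. rewrite Rabs_right; lra. }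
      apply Rabs_def2 in H0. lra. }
    assert (Hgt : g t < ep / 3 * f (Finv f t)).
    { specialize (HT3 t ltac:(lra)). rewrite Rminus_0_r in HT3. apply Rabs_def2 in HT3.
      destruct HT3 as [HT3 _]. assert (0 < f (Finv f t)) by auto.
      apply (Rmult_lt_compat_r (f (Finv f t))) in HT3; auto.
      unfold Rdiv in HT3 at 1. rewrite Rmult_assoc, Rinv_l in HT3; lra. }
    assert (Hgx : g t < ep * f (x t)).
    { destruct (Rlt_or_le (x t) dl) as [Hlt|Hge].
      - assert (f (Finv f t) <= 3 * f (x t)) by (apply Hcmp; auto). nra.
      - assert (m <= f (x t)) by (apply Hm1; split; auto; apply Hbd; lra).
        assert (0 < f (Finv f t)) by auto. nra. }
    unfold u'. assert (g t / f (x t) < ep).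
    { apply (Rmult_lt_reg_r (f (x t))); auto. unfold Rdiv. rewrite Rmult_assoc, Rinv_l; lra. }
    lra. }
  set (hh := fun t => u t - (1 - ep) * t).
  assert (HTpos : 1 <= T) by (unfold T; lra).
  assert (Hhd : forall t, 0 < t -> derivable_pt_lim hh t (u' t - (1 - ep))).
  { intros t Ht. apply (derivable_pt_lim_minus u (fun s => (1 - ep) * s)).
    apply Hud; auto. apply lin_deriv. }
  set (K := Rmin 0 (hh T)).
  assert (HK1 : K <= 0) by apply Rmin_l. assert (HK2 : K <= hh T) by apply Rmin_r.
  assert (Hbar : forall t, T <= t -> K <= hh t).
  { intros t1 Ht1. destruct (Rle_or_lt K (hh t1)) as [|Hlt]; auto. exfalso.
    destruct (Req_dec t1 T) as [->|Hne]. lra.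
    destruct (last_cross hh T t1 K ltac:(lra)) as [s [Hs1 [Hs2 Hs3]]].
    { apply (deriv_cont hh (fun t => u' t - (1 - ep))). intros t Ht. apply Hhd; lra. }
    lra. auto.
    destruct (MVT_cor2 hh (fun t => u' t - (1 - ep)) s t1 ltac:(lra)) as [c [Hc1 Hc2]].
    { intros c Hc. apply Hhd; lra. }
    assert (Hhc : hh c < K) by (apply Hs3; lra).
    assert (u c <= c) by (unfold hh in Hhc; nra).
    assert (1 - ep < u' c) by (apply Hkey; auto; lra).
    nra. }
  set (A := Rabs K + Rabs (u 1 - 1) + 1).
  exists (Rmax T 1 + A / ep). intros t Ht.
  assert (HA : 0 < A) by (unfold A; pose proof (Rabs_pos K); pose proof (Rabs_pos (u 1 - 1)); lra).
  assert (HAe : 0 < A / ep) by (apply Rdiv_lt_0_compat; auto).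
  assert (HTm1 := Rmax_l T 1). assert (HTm2 := Rmax_r T 1).
  assert (Htpos : 0 < t) by lra.
  assert (Hept : A < ep * t).
  { assert (ep * (A / ep) = A) by (field; lra). nra. }
  assert (Hlow : K <= u t - (1 - ep) * t) by (apply (Hbar t); lra).
  assert (Hhigh : u t <= u 1 + (t - 1)) by (apply Hup; lra).
  assert (HKa := Rle_abs (- K)). rewrite Rabs_Ropp in HKa.
  assert (Hua := Rle_abs (u 1 - 1)).
  assert (Hd : Rabs (u t - t) < 2 * ep * t).
  { unfold A in Hept. pose proof (Rabs_pos (u 1 - 1)). apply Rabs_def1; lra. }
  change (Rabs (u t / t - 1) < eps).
  replace (u t / t - 1) with ((u t - t) * / t) by (field; lra).
  rewrite Rabs_mult, (Rabs_right (/ t)) by (left; apply Rinv_0_lt_compat; lra).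
  apply (Rmult_lt_reg_r t); auto. rewrite Rmult_assoc, Rinv_l by lra. nra.
Qed.
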